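(* Let $A\in\mathcal O(X)$. If $v\in\mathcal A(X;\mathbb R^m)$ satisfies $v(x)=0$ for all $x\in\mathrm{supp}(\mu)\cap A$, then $\nabla_\mu v(x)=0$ for $\mu$-a.a. $x\in A$.
   Context: Let $(X,d)$ be a separable compact metric space, $\mu$ a positive Radon measure on $X$, $\mathcal O(X)$ the open subsets, $\mathrm{supp}(\mu)$ the smallest closed set of full measure. Let $\mathcal A(X)$ be a subalgebra of $C(X)$ with $1\in\mathcal A(X)$ having the Urysohn property: for all $K\subset V\subset X$, $K$ compact, $V$ open, there is $\varphi\in\mathcal A(X)$ with $0\le\varphi\le1$, $\varphi=0$ on $X\setminus V$, $\varphi=1$ on $K$. Let $N\ge1$ and $D:\mathcal A(X)\to L^\infty_\mu(X;\mathbb R^N)$ be linear with $D(fg)=fDg+gDf$. Let $m\ge1$, $\mathcal A(X;\mathbb R^m)=\mathcal A(X)^m$, $\mathbb M^{m\times N}$ real $m\times N$ matrices with Euclidean inner product, $\nabla u$ the matrix with rows $Du_1,\dots,Du_m$. Let $\mathcal A^m_0=\{v\in\mathcal A(X;\mathbb R^m):v=0\text{ on }\mathrm{supp}(\mu)\}$, $\mathcal H^m_0=\{w\in L^\infty_\mu(X;\mathbb M^{m\times N}):w=\nabla v\ \mu\text{-a.e. for some }v\in\mathcal A^m_0\}$; for $\mu$-a.e. $x$, $N^m_\mu(x)=\{w(x):w\in\mathcal H^m_0\}$, $T^m_\mu(x)$ its orthogonal complement, $P^m_\mu(x)$ the orthogonal projection onto $T^m_\mu(x)$, $\nabla_\mu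 u(x)=P^m_\mu(x)(\nabla u(x))$. *)

(* Defs.v *)
From HB Require Import structures.
From mathcomp Require Import all_boot all_order all_algebra.
From mathcomp Require Import all_classical all_reals all_analysis.
Set Implicit Arguments. Unset Strict Implicit. Unset Printing Implicit Defensive.
Import Order.TTheory GRing.Theory Num.Theory numFieldNormedType.Exports.
Local Open Scope classical_set_scope.
Local Open Scope ring_scope.

Definition borel (X : ptopologicalType) : measurableType (sigma_display (@open X)) :=
  g_sigma_algebraType (@open X).

Definition separable_space (X : ptopologicalType) :=
  exists S : set X, countable S /\ closure S = setT.

Section Defs.
Variables (R : realType) (X : ptopologicalType).
Variable (mu : {measure set (borel X) -> \bar R}).

(* supp(mu) = smallest closed set of full measure, i.e. the intersection of
   all closed sets F whose complement is mu-null *)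
Definition supp : set X :=
  \bigcap_(F in [set F : set X | closed F /\ mu (~` F) = 0%E]) F.

Definition urysohn_subalgebra (Aalg : set (X -> R)) : Prop :=
  [/\ (forall f, Aalg f -> continuous f),
      Aalg (cst 1),
      (forall f g, Aalg f -> Aalg g -> Aalg (f \+ g)),
      (forall f g, Aalg f -> Aalg g -> Aalg (f \* g)) &
      (forall (c : R) f, Aalg f -> Aalg (fun x => c * f x))] /\
      (forall (K V : set X), compact K -> open V -> K `<=` V ->
         exists phi, [/\ Aalg phi, (forall x, 0 <= phi x <= 1),
                        (forall x, ~ V x -> phi x = 0) &
                        (forall x, K x -> phi x = 1)]).

(* D : A(X) -> L^infty_mu(X; R^N), linear, with the Leibniz rule.
   D f is given by a representative X -> 'rV_N; equalities in L^infty are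
   mu-a.e. equalities. *)
Definition derivation (N : nat) (Aalg : set (X -> R))
    (D : (X -> R) -> X -> 'rV[R]_N) : Prop :=
  [/\ (forall f, Aalg f -> forall i,
          measurable_fun [set: borel X] (fun x => D f x ord0 i)),
      (forall f, Aalg f -> forall i, exists M : R,
          {ae mu, forall x : borel X, `|D f x ord0 i| <= M}),
      (forall f g (a b : R), Aalg f -> Aalg g ->
          {ae mu, forall x : borel X,
             D (fun y => a * f y + b * g y) x = a *: D f x + b *: D g x}) &
      (forall f g, Aalg f -> Aalg g ->
          {ae mu, forall x : borel X,
             D (f \* g) x = f x *: D g x + g x *: D f x})].

Definition grad (N m : nat) (D : (X -> R) -> X -> 'rV[R]_N)
    (v : 'I_m -> X -> R) (x : X) : 'M[R]_(m, N) :=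
  \matrix_(i < m, j < N) D (v i) x ord0 j.

Definition A0 (m : nat) (Aalg : set (X -> R)) : set ('I_m -> X -> R) :=
  [set v | (forall i, Aalg (v i)) /\ (forall x, supp x -> forall i, v i x = 0)].

End Defs.

Definition frob (R : ringType) (m N : nat) (a b : 'M[R]_(m, N)) : R :=
  \sum_(i < m) \sum_(j < N) a i j * b i j.

Definition subspace (R : ringType) (m N : nat) (S : set 'M[R]_(m, N)) :=
  S 0 /\ forall (c : R) u w, S u -> S w -> S (c *: u + w).

Definition orthc (R : ringType) (m N : nat) (S : set 'M[R]_(m, N)) :=
  [set w : 'M[R]_(m, N) | forall s, S s -> frob w s = 0].

Definition orth_proj (R : ringType) (m N : nat) (T : set 'M[R]_(m, N))
    (w : 'M[R]_(m, N)) : 'M[R]_(m, N) :=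
  xget 0 [set t | T t /\ orthc T (w - t)].

Section Normal.
Variables (R : realType) (X : ptopologicalType).
Variable (mu : {measure set (borel X) -> \bar R}).
Variables (N m : nat) (Aalg : set (X -> R)) (D : (X -> R) -> X -> 'rV[R]_N).

(* Nm is (a version of) N^m_mu : for mu-a.e. x, Nm x = {w(x) : w in H^m_0},
   understood as the mu-essential span: Nm is subspace-valued, contains
   grad v (x) for a.e. x for every v in A^m_0 (i.e. every w in H^m_0), and
   is a.e. contained in any other subspace-valued map with this property. *)
Definition is_Nmu (Nm : X -> set 'M[R]_(m, N)) : Prop :=
  [/\ (forall x, subspace (Nm x)),
      (forall v, A0 mu Aalg v ->
         {ae mu, forall x : borel X, Nm x (grad D v x)}) &
      (forall N' : X -> set 'M[R]_(m, N), (forall x, subspace (N' x)) ->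
         (forall v, A0 mu Aalg v ->
            {ae mu, forall x : borel X, N' x (grad D v x)}) ->
         {ae mu, forall x : borel X, Nm x `<=` N' x})].

Definition Tmu (Nm : X -> set 'M[R]_(m, N)) (x : X) := orthc (Nm x).
Definition Pmu (Nm : X -> set 'M[R]_(m, N)) (x : X) := orth_proj (Tmu Nm x).
Definition nabla_mu (Nm : X -> set 'M[R]_(m, N)) (v : 'I_m -> X -> R)
    (x : X) : 'M[R]_(m, N) := Pmu Nm x (grad D v x).
End Normal.

(* Main.v *)
Require Import Defs.
From HB Require Import structures.
From mathcomp Require Import all_boot all_order all_algebra.
From mathcomp Require Import all_classical all_reals all_analysis.
Import Order.TTheory GRing.Theory Num.Theory numFieldNormedType.Exports.
Local Open Scope classical_set_scope.
Local Open Scope ring_scope.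

Lemma frobC (R : comNzRingType) m N (a b : 'M[R]_(m, N)) : frob a b = frob b a.
Proof. by apply: eq_bigr => i _; apply: eq_bigr => j _; rewrite mulrC. Qed.

Lemma frobBl (R : comNzRingType) m N (a b c : 'M[R]_(m, N)) :
  frob (a - b) c = frob a c - frob b c.
Proof.
rewrite /frob -sumrB; apply: eq_bigr => i _; rewrite -sumrB.
by apply: eq_bigr => j _; rewrite !mxE mulrBl.
Qed.

Lemma frob_eq0 (R : realDomainType) m N (a : 'M[R]_(m, N)) : frob a a = 0 -> a = 0.
Proof.
move=> h; apply/matrixP => i j; rewrite mxE.
have h1 := @psumr_eq0P R _ xpredT (fun i => \sum_(j < N) a i j * a i j)
  (fun i _ => sumr_ge0 _ (fun j _ => sqr_ge0 (a i j))) h.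
have := @psumr_eq0P R _ xpredT (fun j => a i j * a i j)
  (fun j _ => sqr_ge0 (a i j)) (h1 i isT) j isT.
by move/eqP; rewrite mulf_eq0 orbb => /eqP.
Qed.

Lemma proj_zero (R : realDomainType) m N (S : set 'M[R]_(m, N)) w :
  S w -> orth_proj (orthc S) w = 0.
Proof.
move=> Sw; rewrite /orth_proj; apply: xget_unique.
  split; first by move=> s _; rewrite /frob big1 // => i _; rewrite big1 // => j _; rewrite mxE mul0r.
  by move=> s Ts; rewrite subr0 frobC; apply: Ts.
move=> t [Tt Ot]; apply: frob_eq0.
have := Ot t Tt; rewrite frobBl frobC (Tt w Sw) sub0r => /eqP; rewrite oppr_eq0 => /eqP.
done.
Qed.

Lemma exhaust (R : realType) (X : pseudoPMetricType R) (U : set X) : open U ->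
  exists K : nat -> set X, (forall n, closed (K n)) /\ (forall n, K n `<=` U) /\
     U `<=` \bigcup_n K n.
Proof.
move=> oU; exists (fun n => closure [set x | ball x (n.+1%:R^-1) `<=` U]).
split; first by move=> n; exact: closed_closure.
split.
  move=> n y; have hp : 0 < n.+1%:R^-1 :> R by rewrite invr_gt0 ltr0n.
  move=> /(_ _ (nbhsx_ballx _ _ hp)) [].
  by move=> z [/= Hz /ball_sym]; apply: Hz.
move=> x Ux; move: oU; rewrite openE => /(_ x Ux) /nbhs_ballP [e /= e0 he].
exists (Num.truncn (e^-1)) => //; apply: subset_closure => /= y /(le_ball _) yb.
apply: he; apply: yb; rewrite -[leRHS]invrK lef_pV2 ?posrE ?invr_gt0 ?ltr0n //.
exact: ltW (truncnS_gt _).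
Qed.

Lemma supp_ae (R : realType) (X : pseudoPMetricType R)
  (X_compact : compact [set: X]) (mu : {measure set (borel X) -> \bar R}) :
  {ae mu, forall x : borel X, supp mu x}.
Proof.
set S := [set F : set X | closed F /\ mu (~` F) = 0%E].
have csupp : closed (supp mu) by apply: closed_bigI => F [].
have osupp : open (~` supp mu) by rewrite openC.
have [K [Kc [KU UK]]] := @exhaust R X _ osupp.
rewrite /almost_everywhere.
apply: (@negligibleS _ _ _ mu (\bigcup_n (K n : set (borel X)))); last first.
  apply: negligible_bigcup.
move=> k.
have cK : compact (K k) by apply: (subclosed_compact (Kc k) X_compact).
move: cK; rewrite compact_cover => /(_ (set X) S (fun F => ~` F)) [].
- by move=> F [cF _]; rewrite openC.
- by move=> x /KU; rewrite /supp setC_bigcap.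
move=> D' D'S KD'.
apply: (@negligibleS _ _ _ mu _ (K k : set (borel X)) KD'); rewrite /cover bigcup_fset big_seq.
apply: (big_ind (fun A : set (borel X) => mu.-negligible A)).
- exact: negligible_set0.
- by move=> ? ?; apply: negligibleU.
move=> F /D'S; rewrite inE => -[cF muF]; exists (~` F); split => //.
apply: sub_gen_smallest; rewrite /= openC; exact: cF.
by move=> x /= nsx; apply: UK.
Qed.

Theorem mainTheorem8 (R : realType) (X : pseudoPMetricType R)
  (X_hausdorff : hausdorff_space X) (X_compact : compact [set: X])
  (X_separable : separable_space X)
  (mu : {measure set (borel X) -> \bar R}) (mu_fin : (mu setT < +oo)%E)
  (Aalg : set (X -> R)) (hA : urysohn_subalgebra Aalg)
  (N : nat) (N_pos : (0 < N)%N) (D : (X -> R) -> X -> 'rV[R]_N)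
  (hD : derivation mu Aalg D)
  (m : nat) (m_pos : (0 < m)%N)
  (Nm : X -> set 'M[R]_(m, N)) (hNm : is_Nmu mu Aalg D Nm)
  (A : set X) (A_open : open A)
  (v : 'I_m -> X -> R) (v_in : forall i, Aalg (v i))
  (v_zero : forall x, supp mu x -> A x -> forall i, v i x = 0) :
  {ae mu, forall x : borel X, A x -> nabla_mu D Nm v x = 0}.
Proof.
have [K [Kc [KA AK]]] := @exhaust R X A A_open.
case: hA => -[_ _ _ hmul _] hU.
case: hD => _ _ _ hL.
case: hNm => _ hN _.
have key : forall n, {ae mu, forall x : borel X,
    K n x -> supp mu x -> Nm x (grad D v x)}.
  move=> n.
  have cK : compact (K n) by apply: (subclosed_compact (Kc n) X_compact).
  have [phi [Aphi _ phi0 phi1]] := hU (K n) A cK A_open (KA n).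
  pose w := fun i => phi \* v i.
  have Aw : A0 mu Aalg w.
    split => [i|x sx i]; first exact: hmul.
    rewrite /w /=; have [Ax|nAx] := pselect (A x).
      by rewrite v_zero ?mulr0.
    by rewrite phi0 ?mul0r.
  have h1 := hN w Aw.
  have h2 : {ae mu, forall x : borel X, forall k (hk : (k < m)%N),
      D (w (Ordinal hk)) x = phi x *: D (v (Ordinal hk)) x
                             + v (Ordinal hk) x *: D phi x}.
    apply: ae_foralln => k; have [hk|hk] := pselect (k < m)%N.
      apply: filterS (hL phi (v (Ordinal hk)) Aphi (v_in _)) => x hx hk0.
      by rewrite (bool_irrelevance hk0 hk).
    by apply: aeW => x hk0; by exfalso; exact: hk hk0.
  apply: filterS2 h1 h2 => x hNx hDx Kx sx.
  have -> : grad D v x = grad D w x.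
    apply/matrixP => -[k hk] j; rewrite !mxE hDx !mxE phi1 //.
    by rewrite (v_zero x sx (KA n x Kx)) mul1r mul0r addr0.
  exact: hNx.
have allk := ae_foralln key.
have hs := @supp_ae R X X_compact mu.
apply: filterS2 allk hs => x hk sx Ax.
have [n _ Kn] := AK x Ax.
rewrite /nabla_mu /Pmu /Tmu; apply: proj_zero.
exact: hk n Kn sx.
Qed.
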